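(* $\mathcal{T}+\mathrm{IND}(\mathrm{Literal}(\mathcal{T}))\equiv\mathcal{T}+\mathrm{IND}(\mathrm{Open}(\mathcal{T}))$, i.e. each of the two theories derives all axioms of the other.
   Context: Language $\{0/0,s/1,p/1,+/2\}$; $\mathcal{T}$ has axioms (universally closed) $0\neq s(x)$, $p(0)=0$, $p(s(x))=x$, $x+0=x$, $x+s(y)=s(x+y)$. $\mathrm{Literal}(\mathcal{T})$ is the set of literals and $\mathrm{Open}(\mathcal{T})$ the set of quantifier-free formulas of this language. $I_x\varphi=\forall\vec z(\varphi(0,\vec z)\wedge\forall x(\varphi(x,\vec z)\to\varphi(s(x),\vec z))\to\forall x\varphi(x,\vec z))$ and $\mathrm{IND}(\Gamma)=\{I_x\gamma:\gamma\in\Gamma\}$. *)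

(* Defs.v *)
From Stdlib Require Import List Arith.
Import ListNotations.

Inductive term : Type :=
| tvar  : nat -> term
| tzero : term
| tsucc : term -> term
| tpred : term -> term
| tplus : term -> term -> term.

Inductive formula : Type :=
| feq  : term -> term -> formula
| fbot : formula
| fneg : formula -> formula
| fand : formula -> formula -> formula
| for_ : formula -> formula -> formula
| fimp : formula -> formula -> formula
| fall : nat -> formula -> formula
| fex  : nat -> formula -> formula.

Record structure : Type := {
  dom : Type;
  izero : dom;
  isucc : dom -> dom;
  ipred : dom -> dom;
  iplus : dom -> dom -> dom }.

Fixpoint teval (M : structure) (rho : nat -> dom M) (t : term) : dom M :=
  match t with
  | tvar n => rho n
  | tzero => izero M
  | tsucc t => isucc M (teval M rho t)
  | tpred t => ipred M (teval M rho t)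
  | tplus t u => iplus M (teval M rho t) (teval M rho u)
  end.

Definition upd {A : Type} (rho : nat -> A) (x : nat) (a : A) : nat -> A :=
  fun y => if Nat.eqb y x then a else rho y.

Fixpoint sat (M : structure) (rho : nat -> dom M) (phi : formula) : Prop :=
  match phi with
  | feq t u => teval M rho t = teval M rho u
  | fbot => False
  | fneg p => ~ sat M rho p
  | fand p q => sat M rho p /\ sat M rho q
  | for_ p q => sat M rho p \/ sat M rho q
  | fimp p q => sat M rho p -> sat M rho q
  | fall x p => forall a : dom M, sat M (upd rho x a) p
  | fex x p => exists a : dom M, sat M (upd rho x a) p
  end.

Fixpoint tfv (t : term) : list nat :=
  match t with
  | tvar n => [n]
  | tzero => []
  | tsucc t | tpred t => tfv t
  | tplus t u => tfv t ++ tfv u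
  end.

Fixpoint ffv (phi : formula) : list nat :=
  match phi with
  | feq t u => tfv t ++ tfv u
  | fbot => []
  | fneg p => ffv p
  | fand p q | for_ p q | fimp p q => ffv p ++ ffv q
  | fall x p | fex x p => remove Nat.eq_dec x (ffv p)
  end.

Definition closure (phi : formula) : formula :=
  fold_right fall phi (ffv phi).

(** Substitution of a term for a variable. It is only applied below to
    quantifier-free formulas, where no variable capture can occur. *)
Fixpoint tsubst (x : nat) (s : term) (t : term) : term :=
  match t with
  | tvar n => if Nat.eqb n x then s else tvar n
  | tzero => tzero
  | tsucc t => tsucc (tsubst x s t)
  | tpred t => tpred (tsubst x s t)
  | tplus t u => tplus (tsubst x s t) (tsubst x s u)
  end.

Fixpoint fsubst (x : nat) (s : term) (phi : formula) : formula :=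
  match phi with
  | feq t u => feq (tsubst x s t) (tsubst x s u)
  | fbot => fbot
  | fneg p => fneg (fsubst x s p)
  | fand p q => fand (fsubst x s p) (fsubst x s q)
  | for_ p q => for_ (fsubst x s p) (fsubst x s q)
  | fimp p q => fimp (fsubst x s p) (fsubst x s q)
  | fall y p => if Nat.eqb y x then fall y p else fall y (fsubst x s p)
  | fex y p => if Nat.eqb y x then fex y p else fex y (fsubst x s p)
  end.

Definition theory := formula -> Prop.

Inductive T_ax : theory :=
| T_ax1 : T_ax (fall 0 (fneg (feq tzero (tsucc (tvar 0)))))
| T_ax2 : T_ax (feq (tpred tzero) tzero)
| T_ax3 : T_ax (fall 0 (feq (tpred (tsucc (tvar 0))) (tvar 0)))
| T_ax4 : T_ax (fall 0 (feq (tplus (tvar 0) tzero) (tvar 0)))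
| T_ax5 : T_ax (fall 0 (fall 1 (feq (tplus (tvar 0) (tsucc (tvar 1)))
                                     (tsucc (tplus (tvar 0) (tvar 1)))))).

Definition is_literal : formula -> Prop :=
  fun phi => exists t u, phi = feq t u \/ phi = fneg (feq t u).

Fixpoint is_open (phi : formula) : Prop :=
  match phi with
  | feq _ _ => True
  | fbot => True
  | fneg p => is_open p
  | fand p q | for_ p q | fimp p q => is_open p /\ is_open q
  | fall _ _ | fex _ _ => False
  end.

Definition Ind (x : nat) (phi : formula) : formula :=
  closure (fimp (fand (fsubst x tzero phi)
                      (fall x (fimp phi (fsubst x (tsucc (tvar x)) phi))))
                (fall x phi)).

Definition IND (Gamma : formula -> Prop) : theory :=
  fun psi => exists x gamma, Gamma gamma /\ psi = Ind x gamma.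

Definition T_plus_IND (Gamma : formula -> Prop) : theory :=
  fun psi => T_ax psi \/ IND Gamma psi.

(** Semantic consequence (equivalent to derivability by Goedel completeness). *)
Definition models (M : structure) (Th : theory) : Prop :=
  forall psi, Th psi -> forall rho, sat M rho psi.

Definition derives (Th : theory) (phi : formula) : Prop :=
  forall M : structure, models M Th -> forall rho, sat M rho phi.

Definition theory_equiv (Th1 Th2 : theory) : Prop :=
  (forall psi, Th2 psi -> derives Th1 psi) /\
  (forall psi, Th1 psi -> derives Th2 psi).

(* Main.v *)
Require Import Defs.
From Stdlib Require Import List Arith Lia Classical Setoid.
Import ListNotations.

Lemma upd_eq {A} (r : nat -> A) x a : upd r x a x = a.
Proof. unfold upd. now rewrite Nat.eqb_refl. Qed.

Lemma teval_ext M r1 r2 t : (forall n, r1 n = r2 n) -> teval M r1 t = teval M r2 t.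
Proof. intros H; induction t; simpl; rewrite ?IHt, ?IHt1, ?IHt2; auto. Qed.

Lemma sat_ext M phi : forall r1 r2, (forall n, r1 n = r2 n) -> (sat M r1 phi <-> sat M r2 phi).
Proof.
  induction phi; intros r1 r2 H; simpl.
  - rewrite (teval_ext M r1 r2 t H), (teval_ext M r1 r2 t0 H). tauto.
  - tauto.
  - rewrite (IHphi r1 r2 H). tauto.
  - rewrite (IHphi1 r1 r2 H), (IHphi2 r1 r2 H). tauto.
  - rewrite (IHphi1 r1 r2 H), (IHphi2 r1 r2 H). tauto.
  - rewrite (IHphi1 r1 r2 H), (IHphi2 r1 r2 H). tauto.
  - assert (Hu : forall a m, upd r1 n a m = upd r2 n a m).
    { intros a m; unfold upd; destruct (m =? n); auto. }
    split; intros Ha a; apply (IHphi _ _ (Hu a)); auto.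
  - assert (Hu : forall a m, upd r1 n a m = upd r2 n a m).
    { intros a m; unfold upd; destruct (m =? n); auto. }
    split; intros [a Ha]; exists a; apply (IHphi _ _ (Hu a)); auto.
Qed.

Lemma teval_subst M r x s t : teval M r (tsubst x s t) = teval M (upd r x (teval M r s)) t.
Proof.
  induction t; simpl; rewrite ?IHt, ?IHt1, ?IHt2; try reflexivity.
  unfold upd; destruct (Nat.eqb n x); reflexivity.
Qed.

Lemma sat_subst M x s phi : is_open phi -> forall r,
  (sat M r (fsubst x s phi) <-> sat M (upd r x (teval M r s)) phi).
Proof.
  induction phi; simpl; intros Ho r; try contradiction.
  - rewrite !teval_subst. tauto.
  - tauto.
  - rewrite IHphi by exact Ho. tauto.
  - destruct Ho as [H1 H2]. rewrite IHphi1, IHphi2 by assumption. tauto.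
  - destruct Ho as [H1 H2]. rewrite IHphi1, IHphi2 by assumption. tauto.
  - destruct Ho as [H1 H2]. rewrite IHphi1, IHphi2 by assumption. tauto.
Qed.

Lemma fold_fall_elim M phi l : forall r, sat M r (fold_right fall phi l) -> sat M r phi.
Proof.
  induction l as [|y l IH]; simpl; intros r H; auto.
  specialize (H (r y)). apply IH in H.
  apply (proj1 (sat_ext M phi (upd r y (r y)) r ltac:(intro n; unfold upd; destruct (Nat.eqb_spec n y); subst; auto))).
  exact H.
Qed.

Lemma fold_fall_intro M phi l : (forall r, sat M r phi) -> forall r, sat M r (fold_right fall phi l).
Proof. induction l; simpl; auto. Qed.

Definition IndP M x phi r := sat M (upd r x (izero M)) phi ->
   (forall a, sat M (upd r x a) phi -> sat M (upd r x (isucc M a)) phi) ->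
   forall a, sat M (upd r x a) phi.

Lemma body_iff M x phi r : is_open phi ->
  (sat M r (fimp (fand (fsubst x tzero phi) (fall x (fimp phi (fsubst x (tsucc (tvar x)) phi)))) (fall x phi)) <-> IndP M x phi r).
Proof.
  intros Ho. unfold IndP. simpl.
  rewrite (sat_subst M x tzero phi Ho r). simpl.
  assert (Hs : forall a, sat M (upd r x a) (fsubst x (tsucc (tvar x)) phi) <-> sat M (upd r x (isucc M a)) phi).
  { intro a. rewrite (sat_subst M x _ phi Ho). simpl. rewrite upd_eq. apply sat_ext. intro n. unfold upd. destruct (n =? x); reflexivity. }
  split.
  - intros H H0 Hst. apply H. split; auto. intros a Ha. apply Hs. auto.
  - intros H [H0 Hst]. apply H; auto. intros a Ha. apply Hs. auto.
Qed.

Lemma Ind_sem M x phi : is_open phi -> ((forall r, sat M r (Ind x phi)) <-> forall r, IndP M x phi r).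
Proof.
  intros Ho; unfold Ind, closure; split.
  - intros H r. apply body_iff; auto. eapply fold_fall_elim. apply H.
  - intros H. apply fold_fall_intro. intro r. apply body_iff; auto.
Qed.

Definition LM M := models M (T_plus_IND is_literal).

Lemma lit_pos M (HM : LM M) x t u r : IndP M x (feq t u) r.
Proof.
  revert r. apply (proj1 (Ind_sem M x (feq t u) I)). intro r'. apply HM. right.
  exists x, (feq t u). split; auto. exists t, u; auto.
Qed.

Lemma lit_neg M (HM : LM M) x t u r : IndP M x (fneg (feq t u)) r.
Proof.
  revert r. apply (proj1 (Ind_sem M x (fneg (feq t u)) I)). intro r'. apply HM. right.
  exists x, (fneg (feq t u)). split; auto. exists t, u; auto.
Qed.


Lemma ax1 M (HM : LM M) a : izero M <> isucc M a.
Proof. pose proof (HM _ (or_introl T_ax1) (fun _ => a) a) as H. cbn in H. exact H. Qed.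
Lemma ax2 M (HM : LM M) : ipred M (izero M) = izero M.
Proof. pose proof (HM _ (or_introl T_ax2) (fun _ => izero M)) as H. cbn in H. exact H. Qed.
Lemma ax3 M (HM : LM M) a : ipred M (isucc M a) = a.
Proof. pose proof (HM _ (or_introl T_ax3) (fun _ => a) a) as H. cbn in H. exact H. Qed.
Lemma ax4 M (HM : LM M) a : iplus M a (izero M) = a.
Proof. pose proof (HM _ (or_introl T_ax4) (fun _ => a) a) as H. cbn in H. exact H. Qed.
Lemma ax5 M (HM : LM M) a b : iplus M a (isucc M b) = isucc M (iplus M a b).
Proof. pose proof (HM _ (or_introl T_ax5) (fun _ => a) a b) as H. cbn in H. exact H. Qed.

Lemma S_inj M (HM : LM M) a b : isucc M a = isucc M b -> a = b.
Proof. intro H. rewrite <- (ax3 M HM a), <- (ax3 M HM b), H. reflexivity. Qed.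

Lemma zero_plus M (HM: LM M) a : iplus M (izero M) a = a.
Proof.
  pose proof (lit_pos M HM 0 (tplus tzero (tvar 0)) (tvar 0) (fun _ => izero M)) as H.
  unfold IndP in H; cbn in H. apply H.
  - apply (ax4 M HM).
  - intros b Hb. rewrite (ax5 M HM). now rewrite Hb.
Qed.

Lemma succ_plus M (HM: LM M) b a : iplus M (isucc M b) a = isucc M (iplus M b a).
Proof.
  pose proof (lit_pos M HM 0 (tplus (tsucc (tvar 1)) (tvar 0)) (tsucc (tplus (tvar 1) (tvar 0))) (fun _ => b)) as H.
  unfold IndP in H; cbn in H. apply H.
  - rewrite !(ax4 M HM). reflexivity.
  - intros c Hc. rewrite !(ax5 M HM). now rewrite Hc.
Qed.

Lemma plus_comm M (HM: LM M) a b : iplus M a b = iplus M b a.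
Proof.
  pose proof (lit_pos M HM 0 (tplus (tvar 1) (tvar 0)) (tplus (tvar 0) (tvar 1)) (fun _ => a)) as H.
  unfold IndP in H; cbn in H. apply H.
  - rewrite (ax4 M HM), (zero_plus M HM). reflexivity.
  - intros c Hc. rewrite (ax5 M HM), (succ_plus M HM). now rewrite Hc.
Qed.

Lemma plus_assoc M (HM: LM M) a b c : iplus M (iplus M a b) c = iplus M a (iplus M b c).
Proof.
  pose proof (lit_pos M HM 0 (tplus (tplus (tvar 1) (tvar 2)) (tvar 0)) (tplus (tvar 1) (tplus (tvar 2) (tvar 0)))
     (fun n => match n with 1 => a | _ => b end)) as H.
  unfold IndP in H; cbn in H. apply H.
  - rewrite !(ax4 M HM). reflexivity.
  - intros d Hd. rewrite !(ax5 M HM). now rewrite Hd.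
Qed.

Lemma plus_cancel M (HM: LM M) a b c : iplus M a c = iplus M b c -> a = b.
Proof.
  intro Habc. apply NNPP. intro Hab.
  pose proof (lit_neg M HM 0 (tplus (tvar 1) (tvar 0)) (tplus (tvar 2) (tvar 0))
     (fun n => match n with 1 => a | _ => b end)) as H.
  unfold IndP in H; cbn in H. apply (H ltac:(rewrite !(ax4 M HM); exact Hab)) with c; auto.
  intros d Hd He. apply Hd. rewrite !(ax5 M HM) in He. apply (S_inj M HM) in He. exact He.
Qed.

Lemma nz_succ M (HM: LM M) a : a <> izero M -> a = isucc M (ipred M a).
Proof.
  intro Ha.
  pose proof (lit_neg M HM 0 (tvar 0) (tvar 1) (fun _ => a)) as H.
  unfold IndP in H; cbn in H.
  destruct (classic (exists y, isucc M y = a)) as [[y Hy]|Hn].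
  - rewrite <- Hy, (ax3 M HM). reflexivity.
  - exfalso. apply (H (fun E => Ha (eq_sym E)) (fun y _ Hs => Hn (ex_intro _ y Hs)) a eq_refl).
Qed.

Lemma plus_succ_ne M (HM: LM M) c e : iplus M c (isucc M e) <> c.
Proof.
  pose proof (lit_neg M HM 0 (tplus (tvar 0) (tsucc (tvar 1))) (tvar 0) (fun _ => e)) as H.
  unfold IndP in H; cbn in H. apply H.
  - rewrite (ax5 M HM). intro E. apply (ax1 M HM _ (eq_sym E)).
  - intros d Hd E. apply Hd. rewrite (ax5 M HM), (succ_plus M HM) in E.
    apply (S_inj M HM) in E. rewrite (ax5 M HM). exact E.
Qed.

Lemma plus_eq_self M (HM: LM M) c e : iplus M c e = c -> e = izero M.
Proof.
  intro H. destruct (classic (e = izero M)) as [E|E]; auto.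
  rewrite (nz_succ M HM e E) in H. exfalso. exact (plus_succ_ne M HM _ _ H).
Qed.

Lemma plus_eq_zero M (HM: LM M) w z : iplus M w z = izero M -> z = izero M.
Proof.
  intro H. destruct (classic (z = izero M)) as [E|E]; auto.
  rewrite (nz_succ M HM z E), (ax5 M HM) in H. exfalso. exact (ax1 M HM _ (eq_sym H)).
Qed.

Definition iS M k v := Nat.iter k (isucc M) v.
Definition addn M k z v := Nat.iter k (fun w => iplus M w z) v.

Lemma iS_add M m n v : iS M (m + n) v = iS M m (iS M n v).
Proof. unfold iS. apply Nat.iter_add. Qed.

Lemma iS_succ_r M k v : iS M (S k) v = iS M k (isucc M v).
Proof. unfold iS. apply Nat.iter_succ_r. Qed.

Lemma iS_plus_l M (HM: LM M) k v c : iplus M (iS M k v) c = iS M k (iplus M v c).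
Proof. unfold iS in *. induction k; simpl; auto. rewrite (succ_plus M HM). now rewrite IHk. Qed.

Lemma iS_plus_r M (HM: LM M) k v c : iplus M c (iS M k v) = iS M k (iplus M c v).
Proof. unfold iS in *. induction k; simpl; auto. rewrite (ax5 M HM). now rewrite IHk. Qed.

Lemma plus_iS M (HM: LM M) d v : iplus M v (iS M d (izero M)) = iS M d v.
Proof. rewrite iS_plus_r by auto. now rewrite (ax4 M HM). Qed.

Lemma iS_nz M (HM: LM M) d v : iS M (S d) v <> izero M.
Proof. simpl. intro E. exact (ax1 M HM _ (eq_sym E)). Qed.

Lemma addn_succ M (HM: LM M) n z w : isucc M (addn M n z w) = addn M n z (isucc M w).
Proof. unfold addn in *. induction n; simpl; auto. rewrite <- IHn, (succ_plus M HM). reflexivity. Qed.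

Lemma addn_l M (HM: LM M) n z a b : iplus M (addn M n z a) b = addn M n z (iplus M a b).
Proof.
  unfold addn in *. induction n; simpl; auto. rewrite <- IHn.
  rewrite !(plus_assoc M HM). f_equal. apply (plus_comm M HM).
Qed.

Lemma addn_r M (HM: LM M) n z a b : iplus M a (addn M n z b) = addn M n z (iplus M a b).
Proof.
  unfold addn in *. induction n; simpl; auto. rewrite <- IHn.
  rewrite !(plus_assoc M HM). reflexivity.
Qed.

Lemma addn_add M n1 n2 z v : addn M (n1 + n2) z v = addn M n1 z (addn M n2 z v).
Proof. unfold addn. apply Nat.iter_add. Qed.

Lemma addn_cancel M (HM: LM M) n z a b : addn M n z a = addn M n z b -> a = b.
Proof. unfold addn in *. induction n; simpl; auto. intro H. apply IHn. eapply plus_cancel; eauto. Qed.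

Lemma addn_zero M (HM: LM M) k z c : addn M k z c = iplus M c (addn M k z (izero M)).
Proof.
  unfold addn in *. induction k; simpl. { symmetry. apply (ax4 M HM). }
  rewrite IHk. apply (plus_assoc M HM).
Qed.

Lemma addn_self M (HM: LM M) k z c : addn M (S k) z c = c -> z = izero M.
Proof.
  intro H. change (iplus M (addn M k z c) z = c) in H.
  rewrite (addn_zero M HM), (plus_assoc M HM) in H.
  apply (plus_eq_self M HM) in H. eapply plus_eq_zero; eauto.
Qed.

Fixpoint nx (x : nat) (t : term) : nat :=
  match t with
  | tvar n => if Nat.eqb n x then 1 else 0
  | tzero => 0
  | tsucc t | tpred t => nx x t
  | tplus t u => nx x t + nx x u
  end.

Fixpoint qt (t : term) : nat :=
  match t with
  | tvar _ | tzero => 0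
  | tsucc t => qt t
  | tpred t => S (qt t)
  | tplus t u => qt t + qt u
  end.

Lemma nonvan M (HM : LM M) x r t : forall K y, qt t <= K -> 1 <= nx x t ->
  exists v, teval M (upd r x (iS M K y)) t = iS M (K - qt t) v.
Proof.
  induction t; intros K y Hq Hn; simpl in *.
  - unfold upd. destruct (Nat.eqb n x). exists y. rewrite Nat.sub_0_r. reflexivity. lia.
  - lia.
  - destruct (IHt K y Hq Hn) as [v Hv]. rewrite Hv. exists (isucc M v).
    rewrite <- iS_succ_r. reflexivity.
  - destruct (IHt K y ltac:(lia) Hn) as [v Hv]. rewrite Hv.
    replace (K - qt t) with (S (K - S (qt t))) by lia. exists v.
    change (iS M (S (K - S (qt t))) v) with (isucc M (iS M (K - S (qt t)) v)).
    apply (ax3 M HM).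
  - destruct (Nat.le_gt_cases 1 (nx x t1)) as [H1|H1].
    + destruct (IHt1 K y ltac:(lia) H1) as [v Hv]. rewrite Hv, (iS_plus_l M HM).
      replace (K - qt t1) with ((K - (qt t1 + qt t2)) + qt t2) by lia.
      rewrite iS_add. eexists; reflexivity.
    + destruct (IHt2 K y ltac:(lia) ltac:(lia)) as [v Hv]. rewrite Hv, (iS_plus_r M HM).
      replace (K - qt t2) with ((K - (qt t1 + qt t2)) + qt t1) by lia.
      rewrite iS_add. eexists; reflexivity.
Qed.

Lemma shift M (HM : LM M) x r t : forall K y z, qt t <= K ->
  teval M (upd r x (iplus M (iS M K y) z)) t = addn M (nx x t) z (teval M (upd r x (iS M K y)) t).
Proof.
  induction t; intros K y z Hq; simpl in *.
  - unfold upd. destruct (Nat.eqb n x); reflexivity.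
  - reflexivity.
  - rewrite IHt by lia. apply (addn_succ M HM).
  - rewrite IHt by lia. destruct (nx x t) as [|n'] eqn:En. reflexivity.
    destruct (nonvan M HM x r t K y ltac:(lia) ltac:(lia)) as [v Hv]. rewrite Hv.
    replace (K - qt t) with (S (K - S (qt t))) by lia.
    change (iS M (S (K - S (qt t))) v) with (isucc M (iS M (K - S (qt t)) v)).
    rewrite <- (addn_succ M HM), !(ax3 M HM). reflexivity.
  - rewrite IHt1, IHt2 by lia. rewrite (addn_l M HM), (addn_r M HM), addn_add. reflexivity.
Qed.

Definition Lg M K v := exists y, v = iS M K y.

Lemma atom_cone M (HM : LM M) x r t u K v : qt t <= K -> qt u <= K -> nx x t = nx x u -> Lg M K v ->
  forall z, (teval M (upd r x v) t = teval M (upd r x v) u <->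
             teval M (upd r x (iplus M v z)) t = teval M (upd r x (iplus M v z)) u).
Proof.
  intros Ht Hu Hn [y ->] z. rewrite !(shift M HM) by auto. rewrite Hn.
  split; intro H. rewrite H; reflexivity. eapply addn_cancel; eauto.
Qed.

Lemma atom_eqn M (HM : LM M) x r t u K v v' : qt t <= K -> qt u <= K -> nx x t = nx x u ->
  Lg M K v -> Lg M K v' ->
  (teval M (upd r x v) t = teval M (upd r x v) u <-> teval M (upd r x v') t = teval M (upd r x v') u).
Proof.
  intros Ht Hu Hn Hv Hv'.
  rewrite (atom_cone M HM x r t u K v Ht Hu Hn Hv v'), (atom_cone M HM x r t u K v' Ht Hu Hn Hv' v).
  rewrite (plus_comm M HM v v'). tauto.
Qed.

Lemma atom_neq M (HM : LM M) x r t u K v w : qt t <= K -> qt u <= K -> nx x t <> nx x u -> Lg M K v ->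
  teval M (upd r x v) t = teval M (upd r x v) u ->
  teval M (upd r x (iplus M v w)) t = teval M (upd r x (iplus M v w)) u -> w = izero M.
Proof.
  intros Ht Hu Hn [y ->] H1 H2. rewrite !(shift M HM) in H2 by auto. rewrite H1 in H2.
  set (c := teval M (upd r x (iS M K y)) u) in *.
  destruct (proj1 (Nat.lt_gt_cases _ _) Hn) as [L|L].
  - destruct (nx x u - nx x t) as [|k] eqn:E; [lia|].
    replace (nx x u) with (nx x t + S k) in H2 by lia.
    rewrite addn_add in H2. apply (addn_cancel M HM) in H2.
    apply (addn_self M HM k w c). auto.
  - destruct (nx x t - nx x u) as [|k] eqn:E; [lia|].
    replace (nx x t) with (nx x u + S k) in H2 by lia.
    rewrite addn_add in H2. apply (addn_cancel M HM) in H2.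
    apply (addn_self M HM k w c). auto.
Qed.

Definition cone M (c : nat -> dom M) := forall i j, i < j ->
  exists w, w <> izero M /\ (c j = iplus M (c i) w \/ c i = iplus M (c j) w).

Lemma atom_unique M (HM : LM M) x r t u K (c : nat -> dom M) :
  qt t <= K -> qt u <= K -> nx x t <> nx x u -> (forall i, Lg M K (c i)) -> cone M c ->
  exists N, forall i, N <= i -> teval M (upd r x (c i)) t <> teval M (upd r x (c i)) u.
Proof.
  intros Ht Hu Hn HL Hc.
  destruct (classic (exists i, teval M (upd r x (c i)) t = teval M (upd r x (c i)) u)) as [[i0 H0]|Hno].
  - exists (S i0). intros i Hi E. destruct (Hc i0 i ltac:(lia)) as [w [Hw [E1|E1]]]; apply Hw.
    + eapply (atom_neq M HM x r t u K (c i0) w); eauto. rewrite <- E1. exact E.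
    + eapply (atom_neq M HM x r t u K (c i) w); eauto. rewrite <- E1. exact H0.
  - exists 0. intros i _ E. apply Hno. eauto.
Qed.

Fixpoint qf (phi : formula) : nat :=
  match phi with
  | feq t u => qt t + qt u
  | fbot => 0
  | fneg p => qf p
  | fand p q | for_ p q | fimp p q => qf p + qf q
  | fall _ p | fex _ p => qf p
  end.

Lemma form_lemma M (HM : LM M) x r K (c1 c2 : nat -> dom M) :
  (forall i, Lg M K (c1 i)) -> cone M c1 -> (forall i, Lg M K (c2 i)) -> cone M c2 ->
  forall phi, is_open phi -> qf phi <= K ->
  exists N, forall i j, N <= i -> N <= j ->
    (sat M (upd r x (c1 i)) phi <-> sat M (upd r x (c2 j)) phi).
Proof.
  intros HL1 Hc1 HL2 Hc2.
  induction phi; simpl; intros Ho Hq; try contradiction.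
  - destruct (Nat.eq_dec (nx x t) (nx x t0)) as [E|E].
    + exists 0. intros i j _ _. apply (atom_eqn M HM x r t t0 K); auto; lia.
    + destruct (atom_unique M HM x r t t0 K c1 ltac:(lia) ltac:(lia) E HL1 Hc1) as [N1 H1].
      destruct (atom_unique M HM x r t t0 K c2 ltac:(lia) ltac:(lia) E HL2 Hc2) as [N2 H2].
      exists (max N1 N2). intros i j Hi Hj. split; intro HH; exfalso.
      * apply (H1 i); auto; lia.
      * apply (H2 j); auto; lia.
  - exists 0. tauto.
  - destruct (IHphi Ho Hq) as [N HN]. exists N. intros i j Hi Hj. rewrite (HN i j Hi Hj). tauto.
  - destruct Ho as [Ho1 Ho2].
    destruct (IHphi1 Ho1 ltac:(lia)) as [N1 H1]. destruct (IHphi2 Ho2 ltac:(lia)) as [N2 H2].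
    exists (max N1 N2). intros i j Hi Hj. rewrite (H1 i j), (H2 i j) by lia. tauto.
  - destruct Ho as [Ho1 Ho2].
    destruct (IHphi1 Ho1 ltac:(lia)) as [N1 H1]. destruct (IHphi2 Ho2 ltac:(lia)) as [N2 H2].
    exists (max N1 N2). intros i j Hi Hj. rewrite (H1 i j), (H2 i j) by lia. tauto.
  - destruct Ho as [Ho1 Ho2].
    destruct (IHphi1 Ho1 ltac:(lia)) as [N1 H1]. destruct (IHphi2 Ho2 ltac:(lia)) as [N2 H2].
    exists (max N1 N2). intros i j Hi Hj. rewrite (H1 i j), (H2 i j) by lia. tauto.
Qed.

Lemma dichot M (HM : LM M) m : forall a, (exists y, a = iS M m y) \/ (exists i, a = iS M i (izero M)).
Proof.
  induction m; intro a.
  - left. exists a. reflexivity.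
  - destruct (IHm a) as [[y Hy]|Hr]; [|right; exact Hr].
    destruct (classic (y = izero M)) as [E|E].
    + right. exists m. subst. reflexivity.
    + left. exists (ipred M y). rewrite iS_succ_r, <- (nz_succ M HM y E). exact Hy.
Qed.

Lemma pred_iS M (HM : LM M) j : forall m y, Nat.iter j (ipred M) (iS M (j + m) y) = iS M m y.
Proof.
  induction j; intros m y; [reflexivity|].
  rewrite Nat.iter_succ_r.
  change (iS M (S j + m) y) with (isucc M (iS M (j + m) y)).
  rewrite (ax3 M HM). apply IHj.
Qed.

Lemma open_ind M (HM : LM M) x phi r : is_open phi -> IndP M x phi r.
Proof.
  intros Ho H0 Hs a. apply NNPP; intro Ha.
  set (K := qf phi).
  assert (Hup : forall m v, sat M (upd r x v) phi -> sat M (upd r x (iS M m v)) phi).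
  { induction m; simpl; auto. }
  assert (Hstd : forall m, sat M (upd r x (iS M m (izero M))) phi) by (intro; apply Hup; auto).
  assert (Hd : forall m, exists y, a = iS M m y).
  { intro m. destruct (dichot M HM m a) as [H|[i Hi]]; auto. exfalso. apply Ha. rewrite Hi. auto. }
  set (c1 := fun i => iS M K (iS M i (izero M))).
  set (c2 := fun j => Nat.iter j (ipred M) a).
  assert (Hc2 : forall j y, a = iS M (j + K) y -> c2 j = iS M K y).
  { intros j y E. unfold c2. rewrite E. apply pred_iS; auto. }
  assert (HL1 : forall i, Lg M K (c1 i)) by (intro i; exists (iS M i (izero M)); reflexivity).
  assert (HL2 : forall j, Lg M K (c2 j)).
  { intro j. destruct (Hd (j + K)) as [y Hy]. exists y. auto. }
  assert (HC1 : cone M c1).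
  { intros i j Hij. exists (iS M (j - i) (izero M)). split.
    - replace (j - i) with (S (j - i - 1)) by lia. apply iS_nz; auto.
    - left. rewrite (plus_iS M HM). unfold c1. rewrite <- !iS_add. f_equal. lia. }
  assert (HC2 : cone M c2).
  { intros i j Hij. exists (iS M (j - i) (izero M)). split.
    - replace (j - i) with (S (j - i - 1)) by lia. apply iS_nz; auto.
    - right. rewrite (plus_iS M HM). destruct (Hd (j + K)) as [y Hy].
      rewrite (Hc2 j y Hy). rewrite (Hc2 i (iS M (j - i) y)).
      + rewrite <- !iS_add. f_equal. lia.
      + rewrite Hy, <- iS_add. f_equal. lia. }
  destruct (form_lemma M HM x r K c1 c2 HL1 HC1 HL2 HC2 phi Ho (le_n _)) as [N HN].
  assert (T1 : sat M (upd r x (c1 N)) phi) by (unfold c1; apply Hup; auto).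
  apply (HN N N (le_n _) (le_n _)) in T1.
  destruct (Hd (N + K)) as [y Hy]. rewrite (Hc2 N y Hy) in T1.
  apply Ha. rewrite Hy, iS_add. apply Hup. exact T1.
Qed.

Theorem proposition16 :
  theory_equiv (T_plus_IND is_literal) (T_plus_IND is_open).
Proof.
  split.
  - intros psi Hpsi M HM rho. destruct Hpsi as [Ht|[x [g [Hg ->]]]].
    + apply HM. left. exact Ht.
    + revert rho. apply (proj2 (Ind_sem M x g Hg)). intro r. apply open_ind; auto.
  - intros psi Hpsi M HM rho. apply HM. destruct Hpsi as [Ht|[x [g [[t [u [->| ->]]] ->]]]].
    + left. exact Ht.
    + right. exists x, (feq t u). split; simpl; auto.
    + right. exists x, (fneg (feq t u)). split; simpl; auto.
Qed.
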